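(* Let $(R,\mathfrak m)$ be a Noetherian local ring of prime characteristic $p$ with $\operatorname{depth} R=0$, and let $L_\bullet$ be a complex of finitely generated free $R$-modules whose differentials, written as matrices with respect to bases, have all entries in $\mathfrak m$. Then for every integer $r$ with $r>\log_p c(R)$ and every integer $j$, $$H_j(L_\bullet\otimes_R {}^{\phi^r}\!R)=0 \iff L_j=0.$$ Consequently, if $M$ is a finitely generated $R$-module such that $\operatorname{Tor}^R_j(M,{}^{\phi^r}\!R)=0$ for some $j\ge 1$ and some $r>\log_p c(R)$, then $M$ is projective.
   Context: $\phi:R\to R$ denotes the Frobenius homomorphism $\phi(a)=a^p$. For $r\ge 1$, ${}^{\phi^r}\!R$ denotes the ring $R$ regarded as an $R$-module via $\phi^r$, i.e. $a\cdot b=a^{p^r}b$. For a local ring $(R,\mathfrak m)$ of depth zero, $c(R)$ is the smallest positive integer $s$ such that $(0:\mathfrak m)_R=\{x\in R\mid \mathfrak m x=0\}\not\subseteq \mathfrak m^s$ (such $s$ exists since $(0:\mathfrak m)_R\neq 0$ and by Krull's intersection theorem). *)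

(* Defs.v *)
From HB Require Import structures.
From mathcomp Require Import all_boot all_order all_algebra.
Set Implicit Arguments. Unset Strict Implicit. Unset Printing Implicit Defensive.
Import Order.TTheory GRing.Theory Num.Theory.
Local Open Scope ring_scope.

Section CommAlg.
Variable R : comUnitRingType.

Definition is_ideal (I : R -> Prop) : Prop :=
  [/\ I 0, (forall x y, I x -> I y -> I (x + y)) & (forall a x, I x -> I (a * x))].

Definition noetherian : Prop :=
  forall I : R -> Prop, is_ideal I ->
    exists s : seq R, forall x,
      I x <-> exists c : 'I_(size s) -> R, x = \sum_(i < size s) c i * s`_i.

(* local ring: the non-units form an ideal (which is then the unique maximal
   ideal m); R is nontrivial since comUnitRingType is a nonzero ring. *)
Definition local_ring : Prop :=
  forall x y : R, x \isn't a GRing.unit -> y \isn't a GRing.unit ->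
    (x + y) \isn't a GRing.unit.

Definition in_max (x : R) : Prop := x \isn't a GRing.unit.

Definition depth_zero : Prop :=
  forall x : R, in_max x -> exists y : R, y != 0 /\ x * y = 0.

Definition in_socle (x : R) : Prop := forall y : R, in_max y -> y * x = 0.

Definition in_max_pow (s : nat) (x : R) : Prop :=
  exists (k : nat) (c : 'I_k -> R) (a : 'I_k -> 'I_s -> R),
    (forall i j, in_max (a i j)) /\
    x = \sum_(i < k) c i * \prod_(j < s) a i j.

Definition is_cR (s : nat) : Prop :=
  (0 < s)%N /\ (exists x, in_socle x /\ ~ in_max_pow s x) /\
  forall t : nat, (0 < t)%N -> (t < s)%N -> forall x, in_socle x -> in_max_pow t x.

Definition frob (p r : nat) (a : R) : R := a ^+ (p ^ r).

(* A complex L of f.g. free modules, L_i = R^(n i) (row vectors), with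
   differential d i : L_i -> L_(i-1) acting by v |-> v *m d i. *)
Definition is_complex (n : int -> nat) (d : forall i : int, 'M[R]_(n i, n (i - 1))) :=
  forall i : int, d i *m d (i - 1) = 0.

Lemma idx_eq (n : int -> nat) (j : int) : n (j + 1 - 1) = n j.
Proof. by rewrite addrK. Qed.

Definition homology_zero (n : int -> nat) (d : forall i : int, 'M[R]_(n i, n (i - 1)))
  (j : int) : Prop :=
  forall v : 'rV[R]_(n j), v *m d j = 0 ->
    exists w : 'rV[R]_(n (j + 1)), castmx (erefl 1%N, idx_eq n j) (w *m d (j + 1)) = v.

(* base change of the complex along phi^r : L (x)_R ^{phi^r}R has the same
   free modules, differentials with entries a replaced by a^(p^r) *)
Definition frob_complex (p r : nat) (n : int -> nat)
  (d : forall i : int, 'M[R]_(n i, n (i - 1))) : forall i : int, 'M[R]_(n i, n (i - 1)) :=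
  fun i => map_mx (frob p r) (d i).

Definition fin_gen (M : lmodType R) : Prop :=
  exists s : seq M, forall x : M,
    exists c : 'I_(size s) -> R, x = \sum_(i < size s) c i *: s`_i.

Definition projective (M : lmodType R) : Prop :=
  forall (A B : lmodType R) (pi : {linear A -> B}),
    (forall b : B, exists a : A, pi a = b) ->
    forall h : {linear M -> B}, exists g : {linear M -> A}, forall x, pi (g x) = h x.

(* F : ... -> R^(n 1) -> R^(n 0) --eps--> M -> 0, a free resolution of M by
   f.g. free modules, differential d k : R^(n k.+1) -> R^(n k). *)
Definition is_free_resolution (M : lmodType R) (n : nat -> nat)
  (d : forall k : nat, 'M[R]_(n k.+1, n k)) (eps : {linear 'rV[R]_(n 0%N) -> M}) : Prop :=
  [/\ (forall x : M, exists v, eps v = x),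
      (forall v : 'rV[R]_(n 0%N), eps v = 0 <-> exists w, w *m d 0%N = v) &
      (forall k (v : 'rV[R]_(n k.+1)), v *m d k = 0 <-> exists w, w *m d k.+1 = v)].

(* Tor_j^R(M, ^{phi^r}R) = 0, computed as H_j(F (x)_R ^{phi^r}R) for a free
   resolution F of M by f.g. free modules *)
Definition tor_frob_zero (p r : nat) (M : lmodType R) (j : nat) : Prop :=
  exists (n : nat -> nat) (d : forall k : nat, 'M[R]_(n k.+1, n k))
         (eps : {linear 'rV[R]_(n 0%N) -> M}),
    is_free_resolution d eps /\
    match j with
    | 0%N => forall v : 'rV[R]_(n 0%N), exists w, w *m map_mx (frob p r) (d 0%N) = v
    | k.+1 => forall v : 'rV[R]_(n k.+1), v *m map_mx (frob p r) (d k) = 0 ->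
                exists w, w *m map_mx (frob p r) (d k.+1) = v
    end.

End CommAlg.

(* Main.v *)
Require Import Defs.
From HB Require Import structures.
From mathcomp Require Import all_boot all_order all_algebra all_fingroup.
Import Order.TTheory GRing.Theory Num.Theory.
Local Open Scope ring_scope.

Lemma in_max0 (R : comUnitRingType) : in_max (0 : R).
Proof. by rewrite /in_max unitr0. Qed.

Lemma in_maxMl (R : comUnitRingType) (a x : R) : in_max x -> in_max (a * x).
Proof. by rewrite /in_max unitrM => /negbTE ->; rewrite andbF. Qed.

Lemma in_maxMr (R : comUnitRingType) (a x : R) : in_max x -> in_max (x * a).
Proof. by rewrite mulrC; apply: in_maxMl. Qed.

Lemma in_maxN (R : comUnitRingType) (x : R) : in_max x -> in_max (- x).
Proof. by rewrite /in_max unitrN. Qed.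

Lemma in_maxD (R : comUnitRingType) (x y : R) : local_ring R ->
  in_max x -> in_max y -> in_max (x + y).
Proof. by move=> loc; apply: loc. Qed.

Lemma in_max_sum (R : comUnitRingType) (I : Type) (s : seq I) (P : pred I) (F : I -> R) :
  local_ring R -> (forall i, P i -> in_max (F i)) -> in_max (\sum_(i <- s | P i) F i).
Proof.
move=> loc H; elim/big_rec: _ => [|i x Pi Hx]; first exact: in_max0.
by apply: in_maxD => //; apply: H.
Qed.

Lemma in_maxX (R : comUnitRingType) (x : R) k : (0 < k)%N -> in_max x -> in_max (x ^+ k).
Proof. by move=> k0; rewrite /in_max unitrX_pos. Qed.

Lemma in_max1 (R : comUnitRingType) : ~ in_max (1 : R).
Proof. by rewrite /in_max unitr1. Qed.


Definition mxm (R : comUnitRingType) m n (A : 'M[R]_(m, n)) := forall i j, in_max (A i j).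
Arguments mxm {R m n}.

Lemma mxm_mull (R : comUnitRingType) m n q (A : 'M[R]_(m, n)) (B : 'M_(n, q)) :
  local_ring R -> mxm A -> mxm (A *m B).
Proof.
move=> loc HA i j; rewrite mxE; apply: in_max_sum => // k _; exact: in_maxMr.
Qed.

Lemma mxm_mulr (R : comUnitRingType) m n q (A : 'M[R]_(m, n)) (B : 'M_(n, q)) :
  local_ring R -> mxm B -> mxm (A *m B).
Proof.
move=> loc HB i j; rewrite mxE; apply: in_max_sum => // k _; exact: in_maxMl.
Qed.

Lemma mxmD (R : comUnitRingType) m n (A B : 'M[R]_(m, n)) :
  local_ring R -> mxm A -> mxm B -> mxm (A + B).
Proof. by move=> loc HA HB i j; rewrite mxE; apply: in_maxD. Qed.

Lemma mxmN (R : comUnitRingType) m n (A : 'M[R]_(m, n)) :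
  mxm A -> mxm (- A).
Proof. by move=> HA i j; rewrite mxE; apply: in_maxN. Qed.

Lemma unit_1sub (R : comUnitRingType) (x : R) :
  local_ring R -> in_max x -> (1 - x) \is a GRing.unit.
Proof.
move=> loc Hx; apply/negP => H; apply: (@in_max1 R).
by rewrite -(subrK x 1); apply: in_maxD => //; apply/negP.
Qed.

Lemma nakayama (R : comUnitRingType) n (K : 'M[R]_n) :
  local_ring R -> mxm K -> (1%:M - K) \in unitmx.
Proof.
move=> loc; elim: n K => [|n IH] K HK; first by rewrite unitmxE det_mx00 unitr1.
rewrite -[n.+1]/(1 + n)%N in K HK *.
rewrite -[K]submxK.
set a := ulsubmx K; set u := ursubmx K; set v := dlsubmx K; set D := drsubmx K.
have Ha : (1%:M - a) \in unitmx.
  rewrite unitmxE det_mx11 !mxE /=.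
  by apply: unit_1sub => //; apply: HK.
pose al : 'M[R]_1 := 1%:M - a.
have HD : mxm (D + v *m invmx al *m u).
  apply: mxmD => //; first by move=> i j; rewrite /D /drsubmx /rsubmx /dsubmx !mxE; apply: HK.
  by apply: mxm_mull => //; apply: mxm_mull => // i j; rewrite /v /dlsubmx /lsubmx /dsubmx !mxE; apply: HK.
have E : 1%:M - block_mx a u v D =
   block_mx 1%:M 0 (- v *m invmx al) 1%:M *m
   block_mx al (- u) 0 (1%:M - (D + v *m invmx al *m u)) :> 'M_(1 + n).
  rewrite mulmx_block !mul1mx !mul0mx ?mulmx0 !addr0 ?add0r.
  rewrite -mulmxA mulVmx // mulmx1 !mulmxN !mulNmx opprK.
  rewrite (scalar_mx_block 1 n 1) opp_block_mx add_block_mx ?oppr0 !add0r.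
  by congr block_mx; symmetry; rewrite addrC opprD addrA subrK.
rewrite E unitmx_mul; apply/andP; split.
  by rewrite unitmxE det_lblock !det1 mulr1 unitr1.
by rewrite unitmxE det_ublock unitrM -!unitmxE Ha IH.
Qed.


Section Frob.
Lemma frob_nat (R : comUnitRingType) p r : p \in [pchar R] -> [pchar R].-nat (p ^ r)%N.
Proof. by move=> H; rewrite pnatX pnatE ?H //; apply: (pcharf_prime H). Qed.

Lemma frob_gt0 (R : comUnitRingType) p r : p \in [pchar R] -> (0 < (p ^ r)%N)%N.
Proof. by move=> H; rewrite expn_gt0 prime_gt0 // (pcharf_prime H). Qed.

Lemma frobD (R : comUnitRingType) p r (x y : R) : p \in [pchar R] ->
  frob p r (x + y) = frob p r x + frob p r y.
Proof. by move=> H; rewrite /frob exprDn_pchar // (@frob_nat R p r H). Qed.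

Lemma frob0 (R : comUnitRingType) p r : p \in [pchar R] -> frob p r (0 : R) = 0.
Proof. by move=> H; rewrite /frob expr0n; move: (@frob_gt0 R p r H); rewrite lt0n => /negbTE ->. Qed.

Lemma frob1 (R : comUnitRingType) p r : frob p r (1 : R) = 1.
Proof. by rewrite /frob expr1n. Qed.

Lemma frobM (R : comUnitRingType) p r (x y : R) :
  frob p r (x * y) = frob p r x * frob p r y.
Proof. by rewrite /frob exprMn. Qed.

Lemma frobN (R : comUnitRingType) p r (x : R) : p \in [pchar R] ->
  frob p r (- x) = - frob p r x.
Proof.
move=> H; apply/eqP; rewrite -subr_eq0 opprK -frobD // addNr frob0 //.
Qed.

Lemma map_frobM (R : comUnitRingType) p r m n q (A : 'M[R]_(m, n)) (B : 'M_(n, q)) :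
  p \in [pchar R] ->
  map_mx (frob p r) (A *m B) = map_mx (frob p r) A *m map_mx (frob p r) B.
Proof.
move=> H; apply/matrixP => i j; rewrite !mxE.
rewrite (big_morph (frob p r) (fun x y => @frobD R p r x y H) (@frob0 R p r H)).
by apply: eq_bigr => k _; rewrite frobM !mxE.
Qed.

Lemma map_frobD (R : comUnitRingType) p r m n (A B : 'M[R]_(m, n)) :
  p \in [pchar R] ->
  map_mx (frob p r) (A + B) = map_mx (frob p r) A + map_mx (frob p r) B.
Proof. by move=> H; apply/matrixP => i j; rewrite !mxE frobD. Qed.

Lemma map_frob1 (R : comUnitRingType) p r n :
  p \in [pchar R] -> map_mx (frob p r) (1%:M : 'M[R]_n) = 1%:M.
Proof.
move=> H; apply/matrixP => i j; rewrite !mxE.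
by case: (i == j); rewrite ?frob1 ?frob0.
Qed.

Lemma map_frob_pid (R : comUnitRingType) p r m n k :
  p \in [pchar R] -> map_mx (frob p r) (pid_mx k : 'M[R]_(m, n)) = pid_mx k.
Proof.
move=> H; apply/matrixP => i j; rewrite !mxE.
by case: (_ && _); rewrite ?frob1 ?frob0.
Qed.

Lemma frob_unit (R : comUnitRingType) p r (x : R) : p \in [pchar R] ->
  (frob p r x \is a GRing.unit) = (x \is a GRing.unit).
Proof. by move=> H; rewrite /frob unitrX_pos // (@frob_gt0 R p r H). Qed.
End Frob.


Lemma in_max_pow_sum (R : comUnitRingType) c N k (w : 'I_k -> R) (a : 'I_k -> R) :
  (c <= N)%N -> (forall i, in_max (a i)) -> in_max_pow c (\sum_(i < k) w i * a i ^+ N).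
Proof.
move=> cN Ha; exists k, (fun i => w i * a i ^+ (N - c)), (fun i _ => a i); split => //.
apply: eq_bigr => i _; rewrite prodr_const card_ord -mulrA -exprD subnK //.
Qed.

Lemma part1 (R : comUnitRingType) (p : nat) :
  local_ring R -> forall (c r : nat), is_cR R c -> (c < p ^ r)%N ->
  (forall (n : int -> nat) (d : forall i : int, 'M[R]_(n i, n (i - 1))),
     is_complex d ->
     (forall (i : int) a b, in_max (d i a b)) ->
     forall j : int, homology_zero (frob_complex p r d) j <-> n j = 0%N).
Proof.
move=> loc c r [c0 [[z [zs znot]] _]] cp n d _ dm j; split; last first.
  move=> nj v _; exists 0; apply/matrixP => i k; exfalso.
  by move: (ltn_ord k); rewrite {2}nj.
move=> H; apply/eqP; apply: contraT; rewrite -lt0n => nj0.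
pose k0 : 'I_(n j) := Ordinal nj0.
have pr0 : (0 < p ^ r)%N by apply: leq_ltn_trans cp.
have [|w Hw] := H (z *: delta_mx 0 k0).
  apply/matrixP => i l; rewrite -scalemxAl -rowE !mxE.
  by rewrite mulrC; apply: zs; rewrite /frob; apply: in_maxX => //.
move/matrixP: Hw => /(_ 0 k0); rewrite castmxE !mxE eqxx mulr1 => Hz.
rewrite -Hz in znot; case: znot.
under eq_bigr do rewrite /frob_complex mxE /frob.
apply: in_max_pow_sum; first exact: ltnW.
by move=> i; apply: dm.
Qed.


Lemma split1P m (i : 'I_(1 + m)) : i = lshift m 0 \/ exists k : 'I_m, i = rshift 1 k.
Proof.
case: i => [[|k] Hk]; first by left; apply: val_inj.
by right; exists (Ordinal (Hk : (k < m)%N)); apply: val_inj.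
Qed.

Definition nfprop (R : comUnitRingType) m n r (B : 'M[R]_(m, n)) :=
  forall (i : 'I_m) (j : 'I_n),
    if ((i < r)%N || (j < r)%N) then B i j = ((i : nat) == j)%:R else in_max (B i j).
Arguments nfprop {R m n}.

Lemma tperm_mxK (R : comUnitRingType) n (i j : 'I_n) : tperm_mx i j *m tperm_mx i j = 1%:M :> 'M[R]_n.
Proof. by rewrite -perm_mxM tperm2 perm_mx1. Qed.

Lemma assoc6 (R : comUnitRingType) a b c d e f (T : 'M[R]_(a, b)) (X1 : 'M_(b, c))
  (X2 : 'M_(c, d)) (Bb : 'M_(d, e)) (Ub : 'M_(e, f)) f' (Tc : 'M_(f, f')) :
  T *m (X1 *m X2) *m Bb *m (Ub *m Tc) = T *m (X1 *m (X2 *m Bb *m Ub)) *m Tc.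
Proof. by rewrite !mulmxA. Qed.

Lemma nf_block (R : comUnitRingType) m n r (B' : 'M[R]_(m, n)) :
  nfprop r B' -> nfprop r.+1 (block_mx 1%:M 0 0 B' : 'M_(1 + m, 1 + n)).
Proof.
move=> HB' i j.
move: (@split1P m i) (@split1P n j) => [Ei|[k Ei]] [Ej|[l Ej]]; subst i j.
- by rewrite block_mxEul /= mxE.
- by rewrite block_mxEur /= [LHS]mxE.
- by rewrite block_mxEdl /= orbT /= [LHS]mxE.

rewrite block_mxEdr /= !ltnS eqSS; exact: HB'.
Qed.

Lemma NF (R : comUnitRingType) m n (A : 'M[R]_(m, n)) : local_ring R ->
  exists (L : 'M_m) (U : 'M_n) (r : nat) (B : 'M_(m, n)),
  [/\ L \in unitmx, U \in unitmx, A = L *m B *m U, ((r <= m) && (r <= n))%N & nfprop r B].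
Proof.
move=> loc; elim: m n A => [|m IH] n A.
  exists 1%:M, 1%:M, 0%N, A; split; rewrite ?unitmx1 ?mul1mx ?mulmx1 //.
  by move=> [].
case: n A => [|n] A.
  exists 1%:M, 1%:M, 0%N, A; split; rewrite ?unitmx1 ?mul1mx ?mulmx1 //.
  by move=> ? [].
case: (boolP [exists ij : 'I_m.+1 * 'I_n.+1, A ij.1 ij.2 \is a GRing.unit]); last first.
  move/existsPn => H0.
  exists 1%:M, 1%:M, 0%N, A; split; rewrite ?unitmx1 ?mul1mx ?mulmx1 //.
  by move=> i j /=; apply: H0 (i, j).
case/existsP => [[i0 j0]] /= Hu.
pose A1 : 'M[R]_(1 + m, 1 + n) := xrow i0 0 (xcol j0 0 A).
pose a := ulsubmx A1; pose u := ursubmx A1; pose v := dlsubmx A1; pose D := drsubmx A1.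
have Ha : a \in unitmx.
  rewrite unitmxE det_mx11 /a /A1 /ulsubmx /usubmx /lsubmx !mxE /=.
  have -> : lshift m (0 : 'I_1) = 0 by apply: val_inj.
  have -> : lshift n (0 : 'I_1) = 0 by apply: val_inj.
  by rewrite !tpermR.
have [L' [U' [r' [B' [HL' HU' HD' /andP[Hrm Hrn] HB']]]]] := IH n (D - v *m invmx a *m u).
pose Tr : 'M[R]_(1 + m) := tperm_mx i0 0.
pose Tc : 'M[R]_(1 + n) := tperm_mx j0 0.
exists (Tr *m (block_mx 1%:M 0 (v *m invmx a) 1%:M *m block_mx 1%:M 0 0 L')).
exists (block_mx a u 0 U' *m Tc), r'.+1, (block_mx 1%:M 0 0 B' : 'M_(1 + m, 1 + n)).
split => //.
- rewrite !unitmx_mul unitmx_perm /=; apply/andP; split.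
    by rewrite unitmxE (@det_lblock _ 1) !det1 mulr1 unitr1.
  by rewrite unitmxE (@det_lblock _ 1) det1 mul1r -unitmxE.
- by rewrite unitmx_mul unitmx_perm andbT unitmxE (@det_ublock _ 1) unitrM -!unitmxE Ha HU'.
- have E1 : block_mx 1%:M 0 0 L' *m block_mx 1%:M 0 0 B' *m block_mx a u 0 U'
      = block_mx a u 0 (D - v *m invmx a *m u) :> 'M_(1 + m, 1 + n).
    rewrite !mulmx_block !mul1mx !mul0mx !mulmx0 !addr0 !add0r ?mulmx0 ?addr0 HD'.
    by rewrite !mul1mx !mul0mx !add0r !addr0.
  have E2 : block_mx 1%:M 0 (v *m invmx a) 1%:M *m block_mx a u 0 (D - v *m invmx a *m u) = A1.
    rewrite mulmx_block !mul1mx !mul0mx !addr0 ?add0r ?mulmx0 ?addr0.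
    rewrite -mulmxA mulVmx // mulmx1 addrC subrK.
    by rewrite submxK.
  rewrite assoc6 E1 E2 /Tr /Tc /A1.
  by rewrite xrowE xcolE !mulmxA tperm_mxK mul1mx -mulmxA tperm_mxK mulmx1.
- by rewrite !ltnS Hrm Hrn.
exact: nf_block.
Qed.


Lemma pidEl (R : comUnitRingType) m n r (A : 'M[R]_(m, n)) i j :
  (pid_mx r *m A) i j = if (i < r)%N then A i j else 0.
Proof.
rewrite mxE (bigD1 i) //= big1 ?addr0 => [|k /negbTE nki].
  by rewrite mxE eqxx /=; case: (i < r)%N; rewrite ?mul1r ?mul0r.
by rewrite mxE; case: eqP => [/val_inj eik|] /=; rewrite ?mul0r //; move: nki; rewrite eik eqxx.
Qed.

Lemma pidEr (R : comUnitRingType) m n r (A : 'M[R]_(m, n)) i j :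
  (A *m pid_mx r) i j = if (j < r)%N then A i j else 0.
Proof.
rewrite mxE (bigD1 j) //= big1 ?addr0 => [|k /negbTE nkj].
  by rewrite mxE eqxx /=; case: (j < r)%N; rewrite ?mulr1 ?mulr0.
by rewrite mxE; case: eqP => [/val_inj eik|] /=; rewrite ?mulr0 //; move: nkj; rewrite eik eqxx.
Qed.

Lemma copidEl (R : comUnitRingType) m n r (A : 'M[R]_(m, n)) i j :
  (copid_mx r *m A) i j = if (r <= i)%N then A i j else 0.
Proof.
rewrite /copid_mx mulmxBl mul1mx mxE [(- (_ : 'M_(_,_))) _ _]mxE pidEl.
by case: ltnP => _; rewrite ?subrr ?subr0.
Qed.

Lemma copidEr (R : comUnitRingType) m n r (A : 'M[R]_(m, n)) i j :
  (A *m copid_mx r) i j = if (r <= j)%N then A i j else 0.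
Proof.
rewrite /copid_mx mulmxBr mulmx1 mxE [(- (_ : 'M_(_,_))) _ _]mxE pidEr.
by case: ltnP => _; rewrite ?subrr ?subr0.
Qed.

Lemma scale_socle (R : comUnitRingType) (z : R) m n (X : 'M[R]_(m, n)) :
  in_socle z -> mxm X -> z *: X = 0.
Proof. by move=> zs HX; apply/matrixP => i j; rewrite !mxE mulrC zs. Qed.

Lemma socle_inv (R : comUnitRingType) (z x : R) :
  z != 0 -> z * x = 0 -> in_max x.
Proof.
move=> z0 zx; apply/negP => ux; move/eqP: z0; apply.
by rewrite -(mulr1 z) -(mulrV ux) mulrA zx mul0r.
Qed.

Lemma nf_row (R : comUnitRingType) m n r (B : 'M[R]_(m, n)) (i : 'I_m) :
  nfprop r B -> (r <= i)%N -> mxm (row i B).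
Proof.
move=> HB ri k j; rewrite !mxE; have := HB i j; rewrite ltnNge ri /=.
case: ltnP => // jr ->; suff /negbTE -> : (i : nat) != j by apply: in_max0.
by apply: contraTneq jr => <-; rewrite -leqNgt.
Qed.

Lemma nf_copid (R : comUnitRingType) m n r (B : 'M[R]_(m, n)) :
  nfprop r B -> B *m copid_mx r = copid_mx r *m B *m copid_mx r.
Proof.
move=> HB; apply/matrixP => i j; rewrite !copidEr copidEl.
case: leqP => // rj; case: leqP => // ir; have := HB i j; rewrite ir /= => ->.
suff /negbTE -> : (i : nat) != j by [].
by apply: contraTneq ir => ->; rewrite -leqNgt.
Qed.

Lemma nf_pid (R : comUnitRingType) m n r (B : 'M[R]_(m, n)) :
  nfprop r B -> (forall (i : 'I_m) (j : 'I_n), (r <= i)%N -> (r <= j)%N -> B i j = 0) -> B = pid_mx r.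
Proof.
move=> HB HZ; apply/matrixP => i j; rewrite mxE; have := HB i j.
case: ltnP => [ir|ri] /=.
  by move=> ->; case: eqP => //= eij; rewrite ir.
case: ltnP => [jr|rj] /=.
  move=> ->; case: eqP => //= eij; exfalso.
  by move: ri; rewrite eij leqNgt jr.
by move=> _; rewrite HZ // andbF.
Qed.

Definition regmx (R : comUnitRingType) m n (A : 'M[R]_(m, n)) :=
  exists Q : 'M_(n, m), A *m Q *m A = A.
Arguments regmx {R m n}.

Lemma reg_pid (R : comUnitRingType) m n r (L : 'M[R]_m) (U : 'M_n) :
  L \in unitmx -> U \in unitmx -> (r <= m)%N -> (r <= n)%N ->
  regmx (L *m pid_mx r *m U).
Proof.
move=> HL HU rm rn; exists (invmx U *m pid_mx r *m invmx L).
rewrite !mulmxA mulmxK // mulmxKV //.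
rewrite -(mulmxA L) mul_pid_mx -(mulmxA L) mul_pid_mx.
have Hn : minn n r = r by apply/minn_idPr.
have Hm : minn m r = r by apply/minn_idPr.
by rewrite minnn Hn minnn Hm.
Qed.


Lemma nak_zero (R : comUnitRingType) n q (K : 'M[R]_n) (N : 'M_(n, q)) :
  local_ring R -> mxm K -> N = K *m N -> N = 0.
Proof.
move=> loc HK HN; have U := @nakayama R n K loc HK.
have : (1%:M - K) *m N = 0 by rewrite mulmxBl mul1mx -HN subrr.
by move/(congr1 (mulmx (invmx (1%:M - K)))); rewrite mulKmx // mulmx0.
Qed.

Lemma stepX (R : comUnitRingType) (z : R) m n q (D1 : 'M[R]_(m, n)) (D0 : 'M_(n, q)) :
  local_ring R -> in_socle z -> z != 0 -> regmx D1 ->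
  (forall v : 'rV_n, v *m D0 = 0 -> exists w : 'rV_m, w *m D1 = v) ->
  D1 *m D0 = 0 -> regmx D0.
Proof.
move=> loc zs z0 [Q HQ] Hex H10.
have [L [U [r [B [HL HU HA /andP[rn rq] HB]]]]] := @NF R n q D0 loc.
pose E' := invmx L *m (Q *m D1) *m L.
have LB : L *m B = D0 *m invmx U by rewrite HA mulmxK.
have E'B : E' *m B = 0.
  by rewrite /E' -mulmxA LB -!mulmxA (mulmxA D1) H10 mul0mx !mulmx0.
have Krow : forall i : 'I_n, (r <= i)%N -> forall j, in_max (E' i j - (i == j :> 'I_n)%:R).
  move=> i ri j.
  pose v : 'rV_n := z *: ((delta_mx 0 i : 'rV_n) *m invmx L).
  have v0 : v *m D0 = 0.
    rewrite /v -scalemxAl HA !mulmxA mulmxKV // -rowE.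
    by apply: scale_socle => //; apply: mxm_mull => //; apply: nf_row ri.
  have [w Hw] := Hex v v0.
  have vE : v *m (Q *m D1) = v.
    by rewrite -Hw -mulmxA (mulmxA D1) HQ.
  have := congr1 (mulmx^~ L) vE.
  rewrite /v -!scalemxAl mulmxKV //.
  rewrite (_ : _ *m _ *m L = (delta_mx 0 i : 'rV_n) *m E'); last by rewrite /E' !mulmxA.
  rewrite -rowE => /matrixP/(_ 0 j); rewrite !mxE /= => Hz.
  apply: (@socle_inv R z) => //; rewrite mulrBr Hz eq_sym subrr //.
pose K := copid_mx r *m (E' - 1%:M).
have HK : mxm K.
  move=> i j; rewrite copidEl; case: leqP => ri; last exact: in_max0.
  rewrite mxE [(- (_ : 'M_(_,_))) _ _]mxE [(1%:M : 'M_(_,_)) _ _]mxE; exact: Krow.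
pose N := copid_mx r *m B *m copid_mx r.
have BN : B *m copid_mx r = N by rewrite nf_copid.
have EB : (E' - 1%:M) *m B = - B by rewrite mulmxBl E'B mul1mx sub0r.
have NK : N = (- K) *m N.
  symmetry; rewrite /K mulNmx -mulmxA -BN (mulmxA (E' - 1%:M)) EB mulNmx mulmxN opprK.
  by rewrite mulmxA -(@nf_copid R n q r B HB).
have N0 : N = 0 by apply: (@nak_zero R n q (- K) N loc _ NK); apply: mxmN.
apply: (@eq_ind _ (L *m pid_mx r *m U)); first exact: reg_pid.
rewrite HA; congr (_ *m _ *m _); apply/esym/nf_pid => // i j ri rj.
by have := congr1 (fun M : 'M_(n, q) => M i j) BN; rewrite copidEr rj N0 mxE.
Qed.


Lemma in_max_powMl (R : comUnitRingType) c (y x : R) :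
  in_max_pow c x -> in_max_pow c (y * x).
Proof.
move=> [k [cf [a [Ha ->]]]]; exists k, (fun i => y * cf i), a; split => //.
by rewrite mulr_sumr; apply: eq_bigr => i _; rewrite mulrA.
Qed.

Lemma mxm_frob (R : comUnitRingType) p rr m n (X : 'M[R]_(m, n)) :
  p \in [pchar R] -> mxm X -> mxm (map_mx (frob p rr) X).
Proof. by move=> H HX i j; rewrite mxE /in_max frob_unit //; apply: HX. Qed.

Lemma stepT (R : comUnitRingType) p rr (z : R) c a b q
    (D1 : 'M[R]_(a, b)) (D0 : 'M_(b, q)) :
  local_ring R -> p \in [pchar R] -> in_socle z -> ~ in_max_pow c z -> (c <= p ^ rr)%N ->
  D1 *m D0 = 0 ->
  (forall v : 'rV_b, v *m map_mx (frob p rr) D0 = 0 ->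
     exists w : 'rV_a, w *m map_mx (frob p rr) D1 = v) ->
  regmx D0.
Proof.
move=> loc pc zs zn cp H10 Hex.
pose F m n (X : 'M[R]_(m, n)) := map_mx (frob p rr) X.
have FM : forall m n k (X : 'M[R]_(m, n)) (Y : 'M_(n, k)), F _ _ (X *m Y) = F _ _ X *m F _ _ Y.
  by move=> *; apply: map_frobM.
have F1 : forall n, F n n 1%:M = 1%:M by move=> n; apply: map_frob1.
have [L [U [r [B [HL HU HA /andP[rb rq] HB]]]]] := @NF R b q D0 loc.
pose G := D1 *m L.
have [L' [U' [r' [B' [HL' HU' HG /andP[ra rb'] HB']]]]] := @NF R a b G loc.
pose W := invmx U'.
have Claim1 : forall i k : 'I_b, (r <= i)%N -> (r' <= k)%N -> in_max (W i k).
  move=> i k ri rk.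
  pose v : 'rV_b := z *: ((delta_mx 0 i : 'rV_b) *m F _ _ (invmx L)).
  have v0 : v *m F _ _ D0 = 0.
    rewrite /v -scalemxAl -mulmxA -FM HA !mulmxA mulVmx // mul1mx -rowE.
    apply: scale_socle => //; rewrite -map_row; apply: mxm_frob => //.
    by rewrite rowE mulmxA -rowE; apply: mxm_mull => //; apply: nf_row ri.
  have [w Hw] := Hex v v0.
  have E : z *: ((delta_mx 0 i : 'rV_b) *m F _ _ W) = (w *m F _ _ L') *m F _ _ B'.
    have : v *m F _ _ L *m F _ _ W = w *m F _ _ D1 *m F _ _ L *m F _ _ W by rewrite Hw.
    rewrite /v -!scalemxAl -(mulmxA _ (F _ _ (invmx L))) -FM mulVmx // F1 mulmx1.
    move=> ->; rewrite -(mulmxA w) -FM -/G HG !FM !mulmxA -(mulmxA _ (F _ _ U')) -FM.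
    by rewrite mulmxV // F1 mulmx1.
  move: E; rewrite -rowE => /matrixP/(_ 0 k).
  rewrite [LHS]mxE [row _ _ _ _]mxE [F _ _ _ _ _]mxE [RHS]mxE => E.
  apply/negP => Wu; have fu : frob p rr (W i k) \is a GRing.unit by rewrite frob_unit.
  apply: zn; rewrite -(mulrK fu z) mulrC E; apply: in_max_powMl.
  under eq_bigr do rewrite [F _ _ _ _ _]mxE /frob.
  apply: in_max_pow_sum => // j; have := HB' j k; rewrite (ltnNge k) rk orbF.
  case: ltnP => // jr ->; suff /negbTE -> : (j : nat) != k by apply: in_max0.
  by apply: contraTneq jr => ->; rewrite -leqNgt.
have GB : G *m B = 0.
  have LB : L *m B = D0 *m invmx U by rewrite HA mulmxK.
  by rewrite /G -mulmxA LB mulmxA H10 mul0mx.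
have BX : B' *m (U' *m B) = 0.
  have : L' *m B' *m U' *m B = 0 by rewrite -HG.
  by move/(congr1 (mulmx (invmx L'))); rewrite !mulmxA mulVmx // mul1mx mulmx0 -mulmxA.
have Claim2 : (pid_mx r' : 'M_b) *m (U' *m B) = 0.
  apply/matrixP => k j; rewrite pidEl [RHS]mxE; case: ltnP => // kr.
  pose k' : 'I_a := Ordinal (leq_trans kr ra).
  have := congr1 (fun M : 'M_(a, q) => M k' j) BX; rewrite [RHS]mxE mxE => <-.
  rewrite (bigD1 k) //= big1 ?addr0 => [|l /negbTE nlk].
    by have := HB' k' k; rewrite kr /= => ->; rewrite eqxx mul1r.
  have := HB' k' l; rewrite kr /= => ->.
  by case: eqP => [/val_inj elk|]; rewrite ?mul0r //; move: nlk; rewrite -elk eqxx.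
pose K := copid_mx r *m W *m copid_mx r' *m U'.
have HK : mxm K.
  apply: mxm_mull => // i k; rewrite copidEr; case: leqP => rk; last exact: in_max0.
  rewrite copidEl; case: leqP => ri; last exact: in_max0.
  exact: Claim1.
pose N := copid_mx r *m B *m copid_mx r.
have BN : B *m copid_mx r = N by rewrite (@nf_copid R b q r B HB).
have CB : copid_mx r *m B = K *m B.
  have -> : K *m B = copid_mx r *m W *m (copid_mx r' *m U' *m B) by rewrite !mulmxA.
  have -> : copid_mx r' *m U' *m B = U' *m B.
    by rewrite -mulmxA /copid_mx mulmxBl mul1mx Claim2 subr0.
  by rewrite mulmxA -(mulmxA _ W) /W mulVmx // mulmx1.
have NK : N = K *m N by rewrite -BN [RHS]mulmxA -CB BN.
have N0 : N = 0 by apply: (@nak_zero R b q K N loc HK NK).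
apply: (@eq_ind _ (L *m pid_mx r *m U)); first exact: reg_pid.
rewrite HA; congr (_ *m _ *m _); apply/esym/nf_pid => // i j ri rj.
by have := congr1 (fun M : 'M_(b, q) => M i j) BN; rewrite copidEr rj N0 mxE.
Qed.


Lemma stepS (R : comUnitRingType) (M : lmodType R) n0 n1 (d0 : 'M[R]_(n1, n0))
    (eps : {linear 'rV[R]_n0 -> M}) :
  regmx d0 -> (forall x, exists v, eps v = x) ->
  (forall v, eps v = 0 <-> exists w, w *m d0 = v) -> projective M.
Proof.
move=> [Q HQ] surj ex.
pose E0 := Q *m d0.
have kerE : forall v, eps v = 0 -> v *m (1%:M - E0) = 0.
  move=> v /ex [w <-].
  by rewrite mulmxBr mulmx1 /E0 -mulmxA (mulmxA d0) HQ subrr.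
have epsE : forall v, eps (v *m E0) = 0.
  by move=> v; apply/ex; exists (v *m Q); rewrite /E0 mulmxA.
have surjb : forall x, exists v, eps v == x.
  by move=> x; have [v Hv] := surj x; exists v; apply/eqP.
pose sel x := xchoose (surjb x).
have selP : forall x, eps (sel x) = x by move=> x; apply/eqP/(xchooseP (surjb x)).
pose s x := sel x *m (1%:M - E0).
have sP : forall x, eps (s x) = x.
  by move=> x; rewrite /s mulmxBr mulmx1 linearB /= epsE subr0 selP.
have slin : forall (a : R) x y, s (a *: x + y) = a *: s x + s y.
  move=> a x y; pose u := sel (a *: x + y) - (a *: sel x + sel y).
  have u0 : eps u = 0 by rewrite /u linearB /= linearP /= !selP subrr.
  have := kerE u u0; rewrite /u mulmxBl => /eqP; rewrite subr_eq0 => /eqP.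
  by rewrite /s => ->; rewrite mulmxDl scalemxAl.
move=> A B pi surjpi h.
have ab : forall i : 'I_n0, exists a : A, pi a == h (eps (delta_mx 0 i)).
  by move=> i; have [a Ha] := surjpi (h (eps (delta_mx 0 i))); exists a; apply/eqP.
pose ai i := xchoose (ab i).
have aiP : forall i, pi (ai i) = h (eps (delta_mx 0 i)) by move=> i; apply/eqP/(xchooseP (ab i)).
pose g0 (v : 'rV[R]_n0) : A := \sum_i v 0 i *: ai i.
pose g x := g0 (s x).
have glin : linear g.
  move=> a x y; rewrite /g slin /g0 scaler_sumr -big_split; apply: eq_bigr => i _.
  by rewrite !mxE scalerA scalerDl.
pose gL : {linear M -> A} := HB.pack g (GRing.isLinear.Build _ _ _ _ g glin).
exists gL => x /=.
rewrite /g /g0 linear_sum /=.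
rewrite -[in RHS](sP x) [s x in RHS]row_sum_delta linear_sum linear_sum /=.
by apply: eq_bigr => i _; rewrite !linearZ /= aiP.
Qed.


Theorem proposition1p3 (R : comUnitRingType) (p : nat) :
  prime p -> p \in [pchar R] ->
  noetherian R -> local_ring R -> depth_zero R ->
  forall (c r : nat), is_cR R c -> (c < p ^ r)%N ->
  (forall (n : int -> nat) (d : forall i : int, 'M[R]_(n i, n (i - 1))),
     is_complex d ->
     (forall (i : int) a b, in_max (d i a b)) ->
     forall j : int, homology_zero (frob_complex p r d) j <-> n j = 0%N)
  /\
  (forall M : lmodType R, fin_gen M ->
     forall j : nat, (1 <= j)%N -> tor_frob_zero p r M j -> projective M).
Proof.
move=> pr pc _ loc _ c r cR cp; split; first exact: (@part1 R p loc c r cR cp).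
move=> M _ j j1 [n [d [eps [[surj ex0 exk] Tor]]]].
case: j j1 Tor => // k _ Tor.
have [_ [[z [zs zn]] _]] := cR.
have cmp : forall i, d i.+1 *m d i = 0.
  move=> i; apply/row_matrixP => l; rewrite row_mul row0.
  by apply/(exk i); exists (delta_mx 0 l); rewrite rowE.
have z0 : z != 0.
  apply/eqP => ez; apply: zn; rewrite ez.
  exists 0%N, (fun _ => 0), (fun _ _ => 0); split; last by rewrite big_ord0.
  by move=> [] [].
have regk : regmx (d k) := @stepT R p r z c _ _ _ (d k.+1) (d k) loc pc zs zn (ltnW cp) (cmp k) Tor.
have down : forall t, (t <= k)%N -> regmx (d (k - t)%N).
  elim => [|t IH] tk; first by rewrite subn0.
  have e : ((k - t.+1).+1 = k - t)%N by rewrite subnSK.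
  have := IH (ltnW tk); rewrite -e => IH'.
  apply: (@stepX R z _ _ _ (d (k - t.+1)%N.+1) (d (k - t.+1)%N) loc zs z0 IH' _ (cmp _)).
  by move=> v /(exk (k - t.+1)%N).
have reg0 : regmx (d 0%N) by have := down k (leqnn k); rewrite subnn.
exact: (@stepS R M _ _ (d 0%N) eps reg0 surj (ex0)).
Qed.
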